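(* For every $d\ge 3$, the group $G_d$ is non-contracting: there is no finite subset $S\subseteq G_d$ such that for every $g\in G_d$ there exists $k\in\mathbb N$ with $g|_u\in S$ for all vertices $u$ with $|u|\ge k$.
   Context: Let $d\ge 3$, $X=\{1,\dots,d\}$, $X^*$ the free monoid on $X$, and $T$ the $d$-regular rooted tree with vertex set $X^*$. $\mathrm{Aut}(T)$ is the group of root-preserving tree automorphisms, with product written left-to-right: $(gh)(u)=h(g(u))$. For $g\in\mathrm{Aut}(T)$ and $u\in X^*$ the section $g|_u$ is defined by $g(uv)=g(u)\,g|_u(v)$. We write $g=(g|_1,\dots,g|_d)\lambda_g$, where $\lambda_g\in S_d$ is the permutation induced by $g$ on $X$, and $e$ is the identity. $\overline{j}\in\{1,\dots,d\}$ denotes $j$ mod $d$. The group $G_d\le \mathrm{Aut}(T)$ is generated by $A=\{a_1,\dots,a_d\}$, where $a_i$ acts on the first level as the transposition $(i\ \overline{i+1})$, with sections $a_i|_i=a_i$, $a_i|_{\overline{i+1}}=a_{\overline{i+1}}$, and $a_i|_x=e$ otherwise (e.g. $a_1=(a_1,a_2,e,\dots,e)(1\,2)$, $a_d=(a_1,e,\dots,e,a_d)(d\ 1)$). *)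

(* Defs.v *)
From mathcomp Require Import all_boot.
Set Implicit Arguments. Unset Strict Implicit. Unset Printing Implicit Defensive.

(* Vertices of the d-regular rooted tree: words over X = 'I_d
   (letter j : 'I_d stands for j+1 in {1,...,d}); the cyclic successor
   "j+1 mod d" is ordS. *)
Definition vertex (d : nat) := seq 'I_d.

(* Action of the generator a_i (inv = false) or of its inverse a_i^{-1}
   (inv = true) on a vertex, following
   a_i = (sections a_i at i, a_{i+1} at i+1, e elsewhere) (i i+1). *)
Fixpoint act_gen (d : nat) (i : 'I_d) (inv : bool) (w : vertex d) : vertex d :=
  match w with
  | [::] => [::]
  | x :: w' =>
    if ~~ inv then
      if x == i then ordS i :: act_gen i inv w'
      else if x == ordS i then i :: act_gen (ordS i) inv w'
      else x :: w'
    else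
      if x == ordS i then i :: act_gen i inv w'
      else if x == i then ordS i :: act_gen (ordS i) inv w'
      else x :: w'
  end.

(* Elements of G_d are represented by words in the generators and their
   inverses; product written left-to-right: (gh)(u) = h(g(u)), so the
   first letter acts first. *)
Definition gword (d : nat) := seq ('I_d * bool).

Definition eval (d : nat) (g : gword d) (w : vertex d) : vertex d :=
  foldl (fun w s => act_gen s.1 s.2 w) w g.

(* Section of an automorphism f at u: f(uv) = f(u) f|_u(v). *)
Definition section (d : nat) (f : vertex d -> vertex d) (u : vertex d)
  : vertex d -> vertex d :=
  fun v => drop (size u) (f (u ++ v)).

(* Main.v *)
Require Import Defs.
From mathcomp Require Import all_boot zify.
From Stdlib Require Import Classical.
Set Implicit Arguments. Unset Strict Implicit. Unset Printing Implicit Defensive.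

Definition L n k : 'I_n.+1 := Ordinal (ltn_pmod k (ltn0Sn n)).
Definition a n k : 'I_n.+1 * bool := (L n k, false).
Definition up n s m : gword n.+1 := map (a n) (iota s m).
Definition pw d (g : gword d) p : gword d := flatten (nseq p g).
Definition U n s := up n s n.+1.
Definition V n u := rev (up n (u+1) n.+1).

Lemma L_per n k : L n (k + n.+1) = L n k.
Proof. by apply: val_inj; rewrite /= modnDr. Qed.

Lemma L_ordS n k : ordS (L n k) = L n k.+1.
Proof. by apply: val_inj => /=; rewrite -[(_ %% _).+1]addn1 modnDml addn1. Qed.

Lemma Lneq n x y : x < y -> y < x + n.+1 -> L n x != L n y.
Proof.
move=> h1 h2; apply/eqP => /(congr1 val) /= /eqP.
have -> : y = x + (y - x) by lia.
rewrite -{1}(addn0 x) eqn_modDl mod0n modn_small; last by lia.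
move/eqP; lia.
Qed.

Lemma Lneq2 n x y : (x < y < x + n.+1) || (y < x < y + n.+1) -> L n x != L n y.
Proof.
case/orP => /andP [h1 h2]; first exact: Lneq.
by rewrite eq_sym; apply: Lneq.
Qed.

Lemma act_hit n (i : 'I_n.+1) w : act_gen i false (i :: w) = ordS i :: act_gen i false w.
Proof. by rewrite /= eqxx. Qed.

Lemma act_hit2 n (i : 'I_n.+1) w : ordS i != i ->
  act_gen i false (ordS i :: w) = i :: act_gen (ordS i) false w.
Proof. by move=> h; rewrite /= (negbTE h) eqxx. Qed.

Lemma act_skip d (i : 'I_d) b x w : x != i -> x != ordS i -> act_gen i b (x :: w) = x :: w.
Proof. by move=> h1 h2; case: b => /=; rewrite (negbTE h1) (negbTE h2). Qed.


Lemma act_cancel d (i : 'I_d) b : (forall j : 'I_d, ordS j != j) ->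
  cancel (act_gen i b) (act_gen i (~~ b)).
Proof.
move=> hS w; elim: w i => [|x w IH] i //; move: IH.
have hS' : forall j : 'I_d, (j == ordS j) = false by move=> j; rewrite eq_sym (negbTE (hS j)).
have hS'' : forall j : 'I_d, (ordS j == j) = false by move=> j; rewrite (negbTE (hS j)).
case: b => /= IH.
- case: (x =P i) => [->|/eqP/negbTE h1]; first by rewrite /= ?hS' ?hS'' ?eqxx /= ?hS' ?hS'' ?eqxx IH.
  case: (x =P ordS i) => [->|/eqP/negbTE h2]; first by rewrite /= ?hS' ?hS'' ?eqxx /= ?hS' ?hS'' ?eqxx IH.
  by rewrite /= ?h1 ?h2 /= ?h1 ?h2.
- case: (x =P i) => [->|/eqP/negbTE h1]; first by rewrite /= ?hS' ?hS'' ?eqxx /= ?hS' ?hS'' ?eqxx IH.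
  case: (x =P ordS i) => [->|/eqP/negbTE h2]; first by rewrite /= ?hS' ?hS'' ?eqxx /= ?hS' ?hS'' ?eqxx IH.
  by rewrite /= ?h1 ?h2 /= ?h1 ?h2.
Qed.

Arguments act_gen : simpl never.

Lemma eval_cat d (g h : gword d) w : eval (g ++ h) w = eval h (eval g w).
Proof. by rewrite /eval foldl_cat. Qed.

Lemma eval_cons d (x : 'I_d * bool) g w : eval (x :: g) w = eval g (act_gen x.1 x.2 w).
Proof. by []. Qed.

Lemma eval_rcons d (g : gword d) x w : eval (rcons g x) w = act_gen x.1 x.2 (eval g w).
Proof. by rewrite -cats1 eval_cat. Qed.

Lemma eval_skip d (g : gword d) x v :
  (forall y, y \in g -> (x != y.1) && (x != ordS y.1)) -> eval g (x :: v) = x :: v.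
Proof.
elim: g => // y g IH H.
have /andP [h1 h2] := H y (mem_head _ _).
rewrite eval_cons act_skip //; apply: IH => z hz; apply: H; by rewrite in_cons hz orbT.
Qed.

Lemma skip_up n s m x v :
  (forall k, s <= k < s + m -> (L n x != L n k) && (L n x != L n k.+1)) ->
  eval (up n s m) (L n x :: v) = L n x :: v.
Proof.
move=> H; apply: eval_skip => y /mapP [k hk ->] /=; rewrite L_ordS; apply: H.
by rewrite -mem_iota.
Qed.

Lemma skip_rup n s m x v :
  (forall k, s <= k < s + m -> (L n x != L n k) && (L n x != L n k.+1)) ->
  eval (rev (up n s m)) (L n x :: v) = L n x :: v.
Proof.
move=> H; apply: eval_skip => y; rewrite mem_rev => /mapP [k hk ->] /=; rewrite L_ordS; apply: H.
by rewrite -mem_iota.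
Qed.

Lemma ordS_L_neq n k : 0 < n -> ordS (L n k) != L n k.
Proof. by move=> hn; rewrite L_ordS eq_sym; apply: Lneq2; lia. Qed.

Lemma up_cat n s m1 m2 : up n s (m1 + m2) = up n s m1 ++ up n (s + m1) m2.
Proof. by rewrite /up iotaD map_cat. Qed.

Lemma eval_up1 n k v : eval (up n k 1) v = act_gen (L n k) false v.
Proof. by []. Qed.

Lemma chainU n s m w :
  eval (up n s m) (L n s :: w) = L n (s+m) :: eval (up n s m) w.
Proof.
elim: m w => [|m IH] w; first by rewrite addn0.
by rewrite -[m.+1]addn1 up_cat !eval_cat IH !eval_up1 act_hit L_ordS addn1 addnS.
Qed.

Lemma chainD n t m w : 0 < n ->
  eval (rev (up n t m)) (L n (t+m) :: w) = L n t :: eval (rev (up n t.+1 m)) w.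
Proof.
move=> hn; elim: m t w => [|m IH] t w; first by rewrite addn0.
rewrite {1}/up /= -/(up n t.+1 m) rev_cons eval_rcons -addSnnS IH /=.
rewrite -L_ordS act_hit2 ?ordS_L_neq //.
by rewrite [in RHS]/up /= -/(up n t.+2 m) rev_cons eval_rcons /= L_ordS.
Qed.

Lemma L_ordS' n k : ordS (L n k) = L n (k+1).
Proof. by rewrite L_ordS addn1. Qed.

Lemma up_eq n s m m' : m = m' -> up n s m = up n s m'.
Proof. by move->. Qed.

Lemma rev_up1 n x : rev (up n x 1) = up n x 1.
Proof. by []. Qed.

Ltac skipt := move=> k hk; apply/andP; split; apply: Lneq2; lia.

Lemma U1 n s w : 1 < n ->
  eval (U n s) (L n (s+1) :: w) = L n (s+n) :: eval [:: a n (s+1); a n s] w.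
Proof.
move=> hn; rewrite /U (@up_eq _ _ n.+1 (1 + ((n-1) + 1))); last by lia.
rewrite !up_cat !eval_cat (eval_up1 s) -L_ordS' act_hit2 ?(ordS_L_neq _ (ltnW hn)) //.
rewrite skip_up; last by skipt.
have -> : s + 1 + (n - 1) = s + n by lia.
rewrite eval_up1 (_ : L n s = ordS (L n (s+n))); last first.
  by rewrite L_ordS (_ : (s+n).+1 = s + n.+1) ?L_per //; lia.
rewrite (act_hit2 (i:=L n (s+n))) ?(ordS_L_neq _ (ltnW hn)) //.
rewrite !L_ordS' (_ : s + n + 1 = s + n.+1); last by lia.
rewrite L_per (_ : s + n.+1 + 1 = (s+1) + n.+1); last by lia.
by rewrite L_per.
Qed.

Lemma Ustep n s x w : 1 < n -> s + 2 <= x <= s + n ->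
  eval (U n s) (L n x :: w) = L n x.-1 :: eval (up n x 1) w.
Proof.
move=> hn hx; rewrite /U (@up_eq _ _ n.+1 ((x-s-1) + (1 + (s+n.+1-x)))); last by lia.
rewrite !up_cat !eval_cat.
have -> : s + (x - s - 1) = x.-1 by lia.
have -> : x.-1 + 1 = x by lia.
rewrite skip_up; last by skipt.
rewrite eval_up1 (_ : L n x = ordS (L n x.-1)); last first.
  by rewrite L_ordS (_ : x.-1.+1 = x) //; lia.
rewrite (act_hit2 (i:=L n x.-1)) ?(ordS_L_neq _ (ltnW hn)) //.
rewrite L_ordS (_ : x.-1.+1 = x); last by lia.
by rewrite skip_up //; skipt.
Qed.

Lemma V0 n u w : 0 < n ->
  eval (V n u) (L n (u+1) :: w) = L n (u+1) :: eval (V n (u+1)) w.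
Proof.
move=> hn; rewrite /V -{1}(L_per n (u+1)) chainD // (addn1 (u+1)) //.
Qed.

Lemma Vstep n u x w : 1 < n -> u + 2 <= x <= u + n ->
  eval (V n u) (L n x :: w) = L n x.+1 :: eval (up n x 1) w.
Proof.
move=> hn hx; rewrite /V (@up_eq _ _ n.+1 ((x-u-1) + (1 + (u+n.+1-x)))); last by lia.
rewrite !up_cat !rev_cat !eval_cat.
have -> : u + 1 + (x - u - 1) = x by lia.
rewrite skip_rup; last by skipt.
rewrite rev_up1 eval_up1 act_hit L_ordS.
by rewrite skip_rup //; skipt.
Qed.

Lemma Vu n u w : 1 < n ->
  eval (V n u) (L n u :: w) = L n (u+2) :: eval (up n u 2) w.
Proof.
move=> hn; rewrite /V (@up_eq _ _ n.+1 (1 + ((n-1) + 1))); last by lia.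
rewrite !up_cat !rev_cat !eval_cat.
have -> : u + 1 + 1 + (n - 1) = u + n.+1 by lia.
rewrite rev_up1 (eval_up1 (u + n.+1)) L_per act_hit L_ordS' skip_rup; last by skipt.
rewrite eval_up1 act_hit L_ordS' -addnA addn1.
by rewrite /eval /up /= addn1.
Qed.

Lemma pw_add d (g : gword d) p q : pw g (p + q) = pw g p ++ pw g q.
Proof. by rewrite /pw nseqD flatten_cat. Qed.

Lemma pwS d (g : gword d) p : pw g p.+1 = g ++ pw g p.
Proof. by []. Qed.

Lemma pw0 d (g : gword d) : pw g 0 = [::].
Proof. by []. Qed.

Lemma pwSr d (g : gword d) p : pw g p.+1 = pw g p ++ g.
Proof. by rewrite -addn1 pw_add pwS pw0 cats0. Qed.

Lemma Uorb n s t w : 1 < n -> t < n ->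
  eval (pw (U n s) t.+1) (L n (s+1) :: w) =
  L n (s+n-t) :: eval ([:: a n (s+1); a n s] ++ rev (up n (s+n-t+1) t)) w.
Proof.
move=> hn; elim: t w => [|t IH] w ht.
  rewrite pwS pw0 cats0 U1 // subn0.
  by rewrite (_ : rev (up n _ 0) = [::]) // cats0.
rewrite pwSr eval_cat IH; last by lia.
rewrite Ustep //; last by lia.
rewrite (_ : (s+n-t).-1 = s+n-t.+1); last by lia.
rewrite (_ : s+n-t.+1+1 = s+n-t); last by lia.
congr (_ :: _); rewrite -eval_cat; congr (eval _ w).
have -> : up n (s+n-t) t.+1 = a n (s+n-t) :: up n (s+n-t+1) t by rewrite /up addn1.
by rewrite rev_cons -cats1 catA.
Qed.

Lemma Upow n s w : 1 < n ->
  eval (pw (U n s) n) (L n (s+1) :: w) = L n (s+1) :: eval (V n (s+1)) w.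
Proof.
case: n w => [//|m] w hn.
rewrite Uorb //.
rewrite (_ : s + m.+1 - m = s + 1); last by lia.
congr (_ :: _); congr (eval _ w).
rewrite /V (@up_eq _ _ m.+2 (m + 2)); last by lia.
rewrite up_cat rev_cat; congr (_ ++ _).
rewrite /up /= /a -(L_per m.+1 (s+1)) -(L_per m.+1 s).
congr [:: (L _ _, _); (L _ _, _)]; lia.
Qed.

Lemma Upowq n s q w : 1 < n ->
  eval (pw (U n s) (q * n)) (L n (s+1) :: w) = L n (s+1) :: eval (pw (V n (s+1)) q) w.
Proof.
move=> hn; elim: q w => [|q IH] w; first by [].
by rewrite mulSn pw_add eval_cat Upow // IH pwS eval_cat.
Qed.

Lemma Uhead n s r w w' : 1 < n -> 0 < r < n ->
  eval (pw (U n s) r) (L n (s+1) :: w) != L n (s+1) :: w'.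
Proof.
move=> hn; case: r => [//|t] ht.
rewrite Uorb //; last by lia.
apply/eqP => [[h _]]; move: h; apply/eqP; apply: Lneq2; lia.
Qed.

Lemma Vorb n u t w : 1 < n -> t < n ->
  eval (pw (V n u) t.+1) (L n u :: w) =
  L n (u+t+2) :: eval (up n u 2 ++ up n (u+2) t) w.
Proof.
move=> hn; elim: t w => [|t IH] w ht.
  by rewrite pwS pw0 cats0 Vu // addn0 cats0.
rewrite pwSr eval_cat IH; last by lia.
rewrite Vstep //; last by lia.
rewrite (_ : (u+t+2).+1 = u+t.+1+2); last by lia.
congr (_ :: _); rewrite -eval_cat; congr (eval _ w).
rewrite -[t.+1]addn1 up_cat catA (_ : u + 2 + t = u + t + 2) //; lia.
Qed.

Lemma Vpow n u w : 1 < n ->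
  eval (pw (V n u) n) (L n u :: w) = L n u :: eval (U n u) w.
Proof.
case: n w => [//|m] w hn.
rewrite Vorb //.
rewrite (_ : u + m + 2 = u + m.+2) ?L_per; last by lia.
by rewrite -up_cat.
Qed.

Lemma Vpowq n u q w : 1 < n ->
  eval (pw (V n u) (q * n)) (L n u :: w) = L n u :: eval (pw (U n u) q) w.
Proof.
move=> hn; elim: q w => [|q IH] w; first by [].
by rewrite mulSn pw_add eval_cat Vpow // IH pwS eval_cat.
Qed.

Lemma Vhead n u r w w' : 1 < n -> 0 < r < n ->
  eval (pw (V n u) r) (L n u :: w) != L n u :: w'.
Proof.
move=> hn; case: r => [//|t] ht.
rewrite Vorb //; last by lia.
apply/eqP => [[h _]]; move: h; apply/eqP; apply: Lneq2; lia.
Qed.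

Lemma Vfix n u q w : 1 < n ->
  eval (pw (V n u) q) (L n (u+1) :: w) = L n (u+1) :: eval (pw (V n (u+1)) q) w.
Proof.
move=> hn; elim: q w => [|q IH] w; first by [].
by rewrite pwS !eval_cat V0 1?ltnW // IH.
Qed.

Lemma U0 n s w : eval (U n s) (L n s :: w) = L n s :: eval (U n s) w.
Proof. by rewrite /U chainU L_per. Qed.

Lemma U0pow n s q w : eval (pw (U n s) q) (L n s :: w) = L n s :: eval (pw (U n s) q) w.
Proof.
elim: q w => [|q IH] w; first by [].
by rewrite pwS !eval_cat U0 IH.
Qed.

Lemma eval_inj d (g : gword d) : (forall j : 'I_d, ordS j != j) -> injective (eval g).
Proof.
move=> hS; elim: g => [|x g IH] u v //= h.
have := IH _ _ h; exact: (can_inj (act_cancel x.1 x.2 hS)).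
Qed.

Lemma inf_order n : 1 < n -> forall p s, (forall w, eval (pw (U n s) p) w = w) -> p = 0.
Proof.
move=> hn p; elim/ltn_ind: p => p IH s H.
case: (posnP p) => [//|p0].
have e := divn_eq p n.
have hr : p %% n = 0.
  apply/eqP; apply: contraT => hr0.
  have hrr : 0 < p %% n < n by rewrite lt0n hr0 ltn_pmod //; lia.
  have := H (L n (s+1) :: [::]); rewrite e pw_add eval_cat Upowq // => habs.
  by have := Uhead s (eval (pw (V n (s + 1)) (p %/ n)) [::]) [::] hn hrr; rewrite habs eqxx.
move: e; rewrite hr addn0; set q := p %/ n => e.
have H1 : forall w, eval (pw (V n (s+1)) q) w = w.
  by move=> w; have := H (L n (s+1) :: w); rewrite e Upowq // => [[]].
have H2 : forall w, eval (pw (V n (s+1+1)) q) w = w.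
  by move=> w; have := H1 (L n (s+1+1) :: w); rewrite Vfix // => [[]].
have e2 := divn_eq q n.
have hr2 : q %% n = 0.
  apply/eqP; apply: contraT => hr0.
  have hrr : 0 < q %% n < n by rewrite lt0n hr0 ltn_pmod //; lia.
  have := H2 (L n (s+1+1) :: [::]); rewrite e2 pw_add eval_cat Vpowq // => habs.
  by have := Vhead (s+1+1) (eval (pw (U n (s+1+1)) (q %/ n)) [::]) [::] hn hrr; rewrite habs eqxx.
move: e2; rewrite hr2 addn0; set q' := q %/ n => e2.
have H3 : forall w, eval (pw (U n (s+1+1)) q') w = w.
  by move=> w; have := H2 (L n (s+1+1) :: w); rewrite e2 Vpowq // => [[]].
have q0 : 0 < q by rewrite lt0n; apply/eqP => q00; move: p0; rewrite e q00.
have lt1 : q < p by rewrite e ltn_Pmulr.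
have le2 : q' <= q by rewrite e2 leq_pmulr //; lia.
have := IH q' (leq_ltn_trans le2 lt1) _ H3.
by move=> h; move: q0; rewrite e2 h.
Qed.

Lemma pigeon (X : eqType) (R : X -> nat -> Prop) (S : seq X) m0 :
  (forall m, m0 <= m -> exists2 x, x \in S & R x m) ->
  exists i j x, [/\ i < j, R x i & R x j].
Proof.
elim: S m0 => [|y S IH] m0 H.
  by have [x] := H m0 (leqnn _).
case: (classic (exists i j, [/\ i < j, R y i & R y j])) => [[i [j [hij hi hj]]]|hno].
  by exists i, j, y.
case: (classic (exists i, m0 <= i /\ R y i)) => [[i0 [hi0 Ri0]]|hnone].
  apply: (IH i0.+1) => m hm.
  have [x] := H m (leq_trans hi0 (ltnW hm)).
  rewrite in_cons => /orP [/eqP ->|xS] Rx; last by exists x.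
  by exfalso; apply: hno; exists i0, m; split.
apply: (IH m0) => m hm.
have [x] := H m hm.
rewrite in_cons => /orP [/eqP ->|xS] Rx; last by exists x.
by exfalso; apply: hnone; exists m.
Qed.

Lemma nseq_fix n q k v :
  eval (pw (U n 0) q) (nseq k (L n 0) ++ v) = nseq k (L n 0) ++ eval (pw (U n 0) q) v.
Proof. by elim: k => //= k IH; rewrite U0pow IH. Qed.

Theorem theorem3p4 (d : nat) (hd : 3 <= d) :
  ~ exists S : seq (gword d),
      forall g : gword d, exists k : nat,
        forall u : vertex d, k <= size u ->
          exists2 s, s \in S & forall v : vertex d,
            section (eval g) u v = eval s v.
Proof.
case: d hd => [//|n] hd [S HS].
have hn : 1 < n by lia.
have hS : forall j : 'I_n.+1, ordS j != j.
  move=> j; have -> : j = L n j by apply: val_inj; rewrite /= modn_small.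
  exact: ordS_L_neq (ltnW hn).
have key : forall m, 0 <= m -> exists2 s, s \in S &
    (fun s m => forall v, eval (pw (U n 0) m) v = eval s v) s m.
  move=> m _; have [k Hk] := HS (pw (U n 0) m).
  have hk : k <= size (nseq k (L n 0)) by rewrite size_nseq.
  have [s sS Hs] := Hk (nseq k (L n 0)) hk.
  exists s => // v; rewrite -Hs /section nseq_fix drop_size_cat //.
have [i [j [x [hij hi hj]]]] := pigeon key.
have hid : forall w, eval (pw (U n 0) (j - i)) w = w.
  move=> w; apply: (@eval_inj _ (pw (U n 0) i) hS).
  by rewrite -eval_cat -pw_add subnK ?(ltnW hij) // hi hj.
have := inf_order hn hid; lia.
Qed.
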